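(* Let $\boldsymbol\Theta^*\in\mathbb R^{n\times r}$ (rows $\boldsymbol\theta_i^{*T}$) and $\mathbf A^*\in\mathbb R^{p\times r}$ (rows $\mathbf a_j^{*T}$) with $\mathbf M^*=\boldsymbol\Theta^*(\mathbf A^* )^T$, let $\mathbf A\in\mathbb R^{p\times r}$ (rows $\mathbf a_j^T$), fix $i\in[n]$, and suppose $\|\boldsymbol\Theta^*\|_{2\to\infty}\le C_1$, $\|\mathbf A^*\|_{2\to\infty}\le C_2$, $\|\mathbf A\|_{2\to\infty}\le C_2$ and $\sigma_r(\mathcal I_{1,i}(\mathbf A))>0$. If there exists $\xi>0$ such that $$2\sigma_r^{-1}(\mathcal I_{1,i}(\mathbf A))\big\{\|\mathbf Z_{i\cdot}\mathrm{diag}(\boldsymbol\Omega_{i\cdot})\mathbf A\|+\|\mathbf B_{1,i}(\mathbf A)\|+\beta_{1,i}(\mathbf A)\kappa_3(C_2(C_1+\xi))\big\}\le\xi\le\frac{\sigma_r(\mathcal I_{1,i}(\mathbf A))}{2\gamma_{1,i}(\mathbf A)\kappa_3(C_2(C_1+\xi))}$$ (the right-hand side read as $+\infty$ if its denominator is $0$), then there exists $\tilde{\boldsymbol\theta}_i\in\mathbb R^r$ with $\|\tilde{\boldsymbol\theta}_i-\boldsymbol\theta_i^*\|\le\xi$ and $S_{1,i}(\tilde{\boldsymbol\theta}_i;\mathbf A)=\mathbf 0$.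
   Context: Deterministic setting: $\phi>0$; $b:\mathbb R\to\mathbb R$ is three times continuously differentiable with $b''>0$; $y_{ij}\in\mathbb R$ and $\omega_{ij}\in\{0,1\}$ are fixed numbers; $z_{ij}=y_{ij}-b'(m^*_{ij})$, $\mathbf Z_{i\cdot}=(z_{i1},\dots,z_{ip})\in\mathbb R^{1\times p}$, $\mathrm{diag}(\boldsymbol\Omega_{i\cdot})=\mathrm{diag}(\omega_{i1},\dots,\omega_{ip})$. $\kappa_3(\alpha)=\sup_{|x|\le\alpha}|b'''(x)|$. Definitions: $S_{1,i}(\boldsymbol\theta;\mathbf A)=\phi^{-1}\sum_{j=1}^p\omega_{ij}\{y_{ij}-b'(\mathbf a_j^T\boldsymbol\theta)\}\mathbf a_j$; $\mathbf B_{1,i}(\mathbf A)=\sum_{j=1}^p\omega_{ij}b''(m^*_{ij})\mathbf a_j(\mathbf a_j-\mathbf a_j^* )^T\boldsymbol\theta_i^*$; $\mathcal I_{1,i}(\mathbf A)=\sum_{j=1}^p\omega_{ij}b''(m^*_{ij})\mathbf a_j\mathbf a_j^T$; $\beta_{1,i}(\mathbf A)=\sup_{\|\mathbf u\|=1}\sum_j\omega_{ij}((\mathbf a_j-\mathbf a_j^* )^T\boldsymbol\theta_i^* )^2|\mathbf a_j^T\mathbf u|$; $\gamma_{1,i}(\mathbf A)=\sup_{\|\mathbf u\|=1}\sum_j\omega_{ij}|\mathbf a_j^T\mathbf u|^3$. $\sigma_r(\cdot)$ denotes the $r$-th largest singular value; $\|X\|_{2\to\infty}$ the maximal row Euclidean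 norm. *)

(* Defs.v *)
From HB Require Import structures.
From mathcomp Require Import all_boot all_order all_algebra.
From mathcomp Require Import all_classical all_reals all_analysis.
Set Implicit Arguments. Unset Strict Implicit. Unset Printing Implicit Defensive.
Import Order.TTheory GRing.Theory Num.Theory.
Local Open Scope ring_scope.
Local Open Scope classical_set_scope.

Section Defs.
Variable R : realType.

Definition fnorm (m c : nat) (M : 'M[R]_(m, c)) : R :=
  Num.sqrt (\sum_(i < m) \sum_(j < c) (M i j) ^+ 2).

Definition norm2inf (m c : nat) (M : 'M[R]_(m, c)) : R :=
  \big[Num.max/0]_(i < m) fnorm (row i M).

(* k-th largest singular value, Courant--Fischer (max-min) definition:
   sigma_k(M) = sup_{dim V = k} inf_{u in V, ||u|| = 1} ||M u|| *)
Definition sing_val (k m c : nat) (M : 'M[R]_(m, c)) : R :=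
  sup [set inf [set fnorm (M *m u) | u in
                  [set u : 'cV[R]_c | (u^T <= V)%MS /\ fnorm u = 1]]
      | V in [set V : 'M[R]_(k, c) | \rank V = k]].

Definition kappa3 (b3 : R -> R) (alpha : R) : R :=
  sup [set `|b3 x| | x in [set x : R | `|x| <= alpha]].

Variables (n p r : nat).

Definition acol (A : 'M[R]_(p, r)) (j : 'I_p) : 'cV[R]_r := (row j A)^T.
Definition thcol (Th : 'M[R]_(n, r)) (i : 'I_n) : 'cV[R]_r := (row i Th)^T.
Definition dotv (x y : 'cV[R]_r) : R := (x^T *m y) 0 0.
Definition Mstar (Th : 'M[R]_(n, r)) (As : 'M[R]_(p, r)) : 'M[R]_(n, p) :=
  Th *m As^T.
Definition omr (Om : 'M[bool]_(n, p)) i j : R := (Om i j)%:R.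

Definition S1 (phi : R) (b1 : R -> R) (Y : 'M[R]_(n, p)) (Om : 'M[bool]_(n, p))
    (i : 'I_n) (th : 'cV[R]_r) (A : 'M[R]_(p, r)) : 'cV[R]_r :=
  phi^-1 *: \sum_(j < p)
     (omr Om i j * (Y i j - b1 (dotv (acol A j) th))) *: acol A j.

Definition Zmat (b1 : R -> R) (Y : 'M[R]_(n, p)) (Th : 'M[R]_(n, r))
    (As : 'M[R]_(p, r)) : 'M[R]_(n, p) :=
  \matrix_(i, j) (Y i j - b1 (Mstar Th As i j)).

Definition ZOA (b1 : R -> R) (Y : 'M[R]_(n, p)) (Om : 'M[bool]_(n, p))
    (Th : 'M[R]_(n, r)) (As A : 'M[R]_(p, r)) (i : 'I_n) : 'rV[R]_r :=
  row i (Zmat b1 Y Th As) *m diag_mx (\row_j omr Om i j) *m A.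

Definition B1 (b2 : R -> R) (Om : 'M[bool]_(n, p)) (Th : 'M[R]_(n, r))
    (As A : 'M[R]_(p, r)) (i : 'I_n) : 'cV[R]_r :=
  \sum_(j < p) (omr Om i j * b2 (Mstar Th As i j)
                 * dotv (acol A j - acol As j) (thcol Th i)) *: acol A j.

Definition I1 (b2 : R -> R) (Om : 'M[bool]_(n, p)) (Th : 'M[R]_(n, r))
    (As A : 'M[R]_(p, r)) (i : 'I_n) : 'M[R]_r :=
  \sum_(j < p) (omr Om i j * b2 (Mstar Th As i j)) *: (acol A j *m (acol A j)^T).

Definition beta1 (Om : 'M[bool]_(n, p)) (Th : 'M[R]_(n, r))
    (As A : 'M[R]_(p, r)) (i : 'I_n) : R :=
  sup [set \sum_(j < p) omr Om i j
             * (dotv (acol A j - acol As j) (thcol Th i)) ^+ 2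
             * `|dotv (acol A j) u|
      | u in [set u : 'cV[R]_r | fnorm u = 1]].

Definition gamma1 (Om : 'M[bool]_(n, p)) (A : 'M[R]_(p, r)) (i : 'I_n) : R :=
  sup [set \sum_(j < p) omr Om i j * `|dotv (acol A j) u| ^+ 3
      | u in [set u : 'cV[R]_r | fnorm u = 1]].

End Defs.

(* Main.v *)
Require Import Defs.
From HB Require Import structures.
From mathcomp Require Import all_boot all_order all_algebra.
From mathcomp Require Import all_classical all_reals all_analysis.
From mathcomp Require Import ring lra.
Import Order.TTheory GRing.Theory Num.Theory numFieldNormedType.Exports.
Local Open Scope ring_scope.
Local Open Scope classical_set_scope.
Section S.
Variable R : realType.

Lemma deriv_pos (g : R -> R) d : is_derive (0:R) 1 g d -> 0 < d ->
  exists2 e : R, 0 < e & forall h, 0 < h < e -> g 0 < g h.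
Proof.
move=> [dg dv] d0.
have : (fun h : R => h^-1 *: ((g \o shift 0) (h *: 1) - g 0)) @ 0^' --> d.
  by rewrite -dv; apply: dg.
move=> /cvgr_gt /(_ 0 d0).
move=> /nbhs_ballP [e e0 He]; exists e => // h /andP[h0 he].
have := He h; rewrite /ball /= sub0r normrN gtr0_norm // => /(_ he).
move=> /(_ (lt0r_neq0 h0)) /=.
rewrite addr0 scaler1 -[_ *: _]/(_ * _) pmulr_rgt0 ?invr_gt0 // subr_gt0 //.
Qed.
End S.
Section S.
Variable R : realType.

Lemma CS (I : finType) (x y : I -> R) :
  (\sum_i x i * y i) ^+ 2 <= (\sum_i x i ^+ 2) * (\sum_i y i ^+ 2).
Proof.
set A := \sum_i x i ^+ 2; set B := \sum_i x i * y i; set C := \sum_i y i ^+ 2.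
have H t : 0 <= t ^+ 2 * A + 2 * t * B + C.
  have -> : t ^+ 2 * A + 2 * t * B + C = \sum_i (t * x i + y i) ^+ 2.
    rewrite /A /B /C mulr_sumr mulr_sumr -!big_split /=.
    by apply: eq_bigr => i _; ring.
  by apply: sumr_ge0 => i _; rewrite sqr_ge0.
have A0 : 0 <= A by apply: sumr_ge0 => i _; rewrite sqr_ge0.
have C0 : 0 <= C by apply: sumr_ge0 => i _; rewrite sqr_ge0.
case: (eqVneq A 0) => [Ae|An].
  have xi0 i : x i = 0.
    have /psumr_eq0P h : A = 0 by [].
    by apply/eqP; rewrite -sqrf_eq0; apply/eqP/h => // j _; rewrite sqr_ge0.
  rewrite /B big1 ?expr0n ?Ae ?mul0r // => i _; by rewrite xi0 mul0r.
have Ap : 0 < A by rewrite lt_neqAle eq_sym An A0.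
pose t := - B / A.
have At : A * t = - B by rewrite /t mulrC divfK.
have := H t.
nra.
Qed.

End S.
Section S.
Variable R : realType.

Lemma cont_sum (T : topologicalType) n (F : 'I_n -> T -> R) :
  (forall j, continuous (F j)) -> continuous (fun x => \sum_(j < n) F j x).
Proof.
move=> H.
have -> : (fun x => \sum_(j < n) F j x) = \sum_(j < n) F j.
  by apply/funext => x; rewrite fct_sumE.
apply: (big_ind (fun f : T -> R => continuous f)) => //.
- exact: cst_continuous.
- move=> f g cf cg x; exact: (continuousD (cf x) (cg x)).
Qed.

Lemma small_t (c w D : R) : 0 <= w -> 0 <= D -> (0 < D \/ c < 0) ->
  exists2 e : R, 0 < e & forall t, 0 < t < e -> 2 * t * c + t ^+ 2 * w <= D.
Proof.
move=> w0 D0 [Dp|cn].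
  exists (Num.min 1 (D / (2 * `|c| + w + 1))).
    by rewrite lt_min ltr01 /= divr_gt0 // ; have := normr_ge0 c; lra.
  move=> t /andP[t0]; rewrite lt_min => /andP[t1 tD].
  have hc : 0 < 2 * `|c| + w + 1 by have := normr_ge0 c; lra.
  have : t * (2 * `|c| + w + 1) < D by rewrite -ltr_pdivlMr.
  have h1 : t ^+ 2 * w <= t * w.
    rewrite expr2 -mulrA ler_pM2l //; have := mulr_ge0 (ltW t0) w0; nra.
  have h2 : c <= `|c| := ler_norm c.
  have h3 : 0 <= `|c| := normr_ge0 c.
  nra.
exists (- 2 * c / (w + 1)); first by rewrite divr_gt0 //; lra.
move=> t /andP[t0 te].
have hw : 0 < w + 1 by lra.
have : t * (w + 1) < - 2 * c by rewrite -ltr_pdivlMr.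
nra.
Qed.

Lemma is_derive_affine (f df : R -> R) (c d : R) :
  (forall x : R, is_derive x 1 f (df x)) ->
  is_derive (0:R) 1 (fun t => f (c + t * d)) (df c * d).
Proof.
move=> Hf.
have Hu : is_derive (0:R) 1 (fun t : R => c + t * d) d.
  rewrite (_ : (fun t => c + t*d) = (cst c + d \*: (@id R))); last first.
    by apply/funext => t /=; rewrite mulrC.
  have H1 : is_derive (0:R) 1 (cst c) 0 by exact: is_derive_cst.
  have H2 : is_derive (0:R) 1 (d \*: (@id R)) (d *: 1).
    by apply: is_deriveZ; exact: is_derive_id.
  have H3 := is_deriveD H1 H2.
  by rewrite add0r scaler1 in H3.
have dfu : derivable (fun t : R => c + t * d) 0 1 by case: Hu.
have dfc : derivable f (c + 0 * d) 1 by case: (Hf (c + 0 * d)).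
apply: DeriveDef.
  apply/derivable1_diffP.
  apply: (@differentiable_comp _ _ _ _ (fun t : R => c + t * d) f).
    exact/derivable1_diffP.
  exact/derivable1_diffP.
rewrite -derive1E.
have := derive1_comp dfu dfc.
rewrite /comp => ->.
rewrite !derive1E mul0r addr0 (@derive_val _ _ _ _ _ _ _ Hu).
by rewrite (@derive_val _ _ _ _ _ _ _ (Hf c)).
Qed.

End S.
Section S4.
Variable R : realType.

Lemma cont_of_der (f df : R -> R) :
  (forall x : R, is_derive x 1 f (df x)) -> continuous f.
Proof.
move=> H x; apply: differentiable_continuous; apply/derivable1_diffP.
by case: (H x).
Qed.

Lemma MVT_between (g dg : R -> R) (x m : R) :
  (forall t : R, is_derive t 1 g (dg t)) ->
  exists c, ((m <= c <= x) \/ (x <= c <= m)) /\ g x - g m = dg c * (x - m).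
Proof.
move=> H.
have cg : continuous g := @cont_of_der g dg H.
have cw (a b : R) : {within `[a, b], continuous g}.
  by apply: continuous_subspaceT.
case: (leP m x) => hmx.
  have [c hc E] := @MVT_segment R g dg m x hmx (fun t _ => H t) (cw m x).
  by exists c; split => //; left; move: hc; rewrite in_itv /=.
have hxm : x <= m by lra.
have [c hc E] := @MVT_segment R g dg x m hxm (fun t _ => H t) (cw x m).
exists c; split.
  by right; move: hc; rewrite in_itv /=.
have -> : g x - g m = - (g m - g x) by ring.
rewrite E; ring.
Qed.

End S4.
Section S5.
Variable R : realType.

Lemma der_h (f1 f2 : R -> R) (m L t : R) :
  (forall t : R, is_derive t 1 f1 (f2 t)) ->
  is_derive t 1 (fun t => f1 t - f2 m * t - L * ((t - m) * (t - m)))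
    (f2 t - f2 m - L * (2 * (t - m))).
Proof.
move=> H.
have H1 : is_derive t 1 ((f2 m) \*: (@id R)) (f2 m *: 1).
  by apply: is_deriveZ; exact: is_derive_id.
have H2 : is_derive t 1 ((@id R) - cst m) (1 - 0).
  by apply: is_deriveB; try exact: is_derive_id; try exact: is_derive_cst.
have H3 := is_deriveM H2 H2.
have H4 := is_deriveZ L H3.
have H5 := is_deriveB (H t) H1.
have H6 := is_deriveB H5 H4.
have -> : (fun t => f1 t - f2 m * t - L * ((t - m) * (t - m))) =
   (f1 - f2 m \*: id - L \*: ((id - cst m) * (id - cst m))).
  by apply/funext => s /=.
apply: (is_derive_eq H6).
have -> : (id - cst m) t = t - m by [].
rewrite /GRing.scale /= !mulr1 subr0; ring.
Qed.
End S5.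
Section S6.
Variable R : realType.

Lemma lipb (f2 f3 : R -> R) (K a : R) :
  (forall t : R, is_derive t 1 f2 (f3 t)) ->
  (forall t : R, `|t| <= a -> `|f3 t| <= K) ->
  forall u v : R, `|u| <= a -> `|v| <= a -> `|f2 u - f2 v| <= K * `|u - v|.
Proof.
move=> H Hb u v hu hv.
have [c [hc E]] := @MVT_between R f2 f3 u v H.
rewrite E normrM ler_wpM2r //; apply: Hb.
move: hu hv; rewrite !ler_norml => /andP[? ?] /andP[? ?].
case: hc => /andP[? ?]; apply/andP; split; lra.
Qed.

Lemma taylor (f1 f2 f3 : R -> R) (K a : R) :
  (forall t : R, is_derive t 1 f1 (f2 t)) ->
  (forall t : R, is_derive t 1 f2 (f3 t)) ->
  (forall t : R, `|t| <= a -> `|f3 t| <= K) ->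
  forall x m : R, `|x| <= a -> `|m| <= a ->
  `|f1 x - f1 m - f2 m * (x - m)| <= K / 2 * (x - m) ^+ 2.
Proof.
move=> H1 H2 Hb x m hx hm.
have key L : exists c, ((m <= c <= x) \/ (x <= c <= m)) /\
    f1 x - f1 m - f2 m * (x - m) - L * (x - m) ^+ 2
    = (f2 c - f2 m - L * (2 * (c - m))) * (x - m).
  have [c [hc E]] := @MVT_between R _ _ x m (fun t => @der_h R f1 f2 m L t H1).
  by exists c; split => //; rewrite -E; ring.
have hc_lip c : ((m <= c <= x) \/ (x <= c <= m)) ->
    `|f2 c - f2 m| <= K * `|c - m|.
  move=> hc; apply: (@lipb f2 f3 K a H2 Hb c m) => //.
  move: hx hm; rewrite !ler_norml => /andP[? ?] /andP[? ?].
  case: hc => /andP[? ?]; apply/andP; split; lra.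
have prod c : ((m <= c <= x) \/ (x <= c <= m)) ->
    `|c - m| * `|x - m| = (c - m) * (x - m) /\ `|c - m| <= `|x - m|.
  case=> /andP[h1 h2].
    rewrite !ger0_norm; [split=> //; lra | lra | lra].
  rewrite !ler0_norm; [split; [ring | lra] | lra | lra].
have K0 : 0 <= K by apply: le_trans (Hb 0 _); rewrite ?normr0 //; apply: le_trans hm.
rewrite ler_norml; apply/andP; split.
  have [c [hc E]] := key (- (K / 2)).
  have := hc_lip c hc; have [P1 P2] := prod c hc.
  set u := f2 c - f2 m.
  have : - `|u| * `|x - m| <= u * (x - m).
    have := ler_norm (- (u * (x - m))); rewrite normrN normrM; lra.
  move: E; rewrite -/u => E hu hl.
  have h3 : `|u| * `|x - m| <= K * ((c - m) * (x - m)).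
    by rewrite -P1 mulrA; apply: ler_wpM2r.
  nra.
have [c [hc E]] := key (K / 2).
have := hc_lip c hc; have [P1 P2] := prod c hc.
set u := f2 c - f2 m.
have : u * (x - m) <= `|u| * `|x - m|.
  by rewrite -normrM; exact: ler_norm.
move: E; rewrite -/u => E hu hl.
have h3 : `|u| * `|x - m| <= K * ((c - m) * (x - m)).
  by rewrite -P1 mulrA; apply: ler_wpM2r.
nra.
Qed.

End S6.
Section S7.
Variable R : realType.

Lemma rV_max n (F : 'rV[R]_n -> R) (A : set 'rV[R]_n) (B : R) (x1 : 'rV[R]_n) :
  0 <= B -> continuous F -> closed A -> (forall x, A x -> forall k, `|x 0 k| <= B) -> A x1 ->
  exists x0, A x0 /\ forall x, A x -> F x <= F x0.
Proof.
move=> B0 cF cA hB Ax1.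
have bA : bounded_set A.
  exists B; split; first exact: num_real.
  move=> M BM x Ax /=.
  rewrite [leLHS]/Num.norm /= mx_normrE; apply: bigmax_le.
    by apply: ltW; apply: le_lt_trans BM.
  move=> [a b] _ /=; rewrite (ord1 a); apply: ltW; apply: le_lt_trans BM; exact: hB.
have cpA := bounded_closed_compact bA cA.
have [c cA' Hc] := @compact_EVT_max _ R F A (ex_intro _ x1 Ax1) cpA
    (continuous_subspaceT cF).
exists c; split; first by rewrite inE in cA'.
by move=> x Ax; apply: Hc; rewrite inE.
Qed.

End S7.
Section S8.
Variable R : realType.

Lemma cont_M (T : topologicalType) (f g : T -> R) :
  continuous f -> continuous g -> continuous (fun x => f x * g x).
Proof. by move=> cf cg x; exact: (continuousM (cf x) (cg x)). Qed.
Lemma cont_D (T : topologicalType) (f g : T -> R) :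
  continuous f -> continuous g -> continuous (fun x => f x + g x).
Proof. by move=> cf cg x; exact: (continuousD (cf x) (cg x)). Qed.
Lemma cont_N (T : topologicalType) (f : T -> R) :
  continuous f -> continuous (fun x => - f x).
Proof. by move=> cf x; exact: (continuousN (cf x)). Qed.
Lemma cont_B (T : topologicalType) (f g : T -> R) :
  continuous f -> continuous g -> continuous (fun x => f x - g x).
Proof. by move=> cf cg; apply: cont_D => //; apply: cont_N. Qed.
Lemma cont_c (T : topologicalType) (a : R) : continuous (fun _ : T => a).
Proof. exact: cst_continuous. Qed.
Lemma cont_X (T : topologicalType) (f : T -> R) :
  continuous f -> continuous (fun x => f x ^+ 2).
Proof. by move=> cf; apply: (@cont_M T f f). Qed.
Lemma cont_o (T : topologicalType) (b : R -> R) (f : T -> R) :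
  continuous b -> continuous f -> continuous (fun x => b (f x)).
Proof. by move=> cb cf x; apply: (continuous_comp (cf x)); apply: cb. Qed.
Lemma cont_coord n (k : 'I_n) : continuous (fun x : 'rV[R]_n => x 0 k).
Proof. exact: coord_continuous. Qed.

Lemma closed_lev (T : topologicalType) (f : T -> R) (a : R) :
  continuous f -> closed [set x | f x <= a].
Proof.
move=> cf; have := @preimage_closed T R f [set y | y <= a].
by apply; [move=> x _; apply: cf | exact: closed_le].
Qed.
Lemma closed_eqv (T : topologicalType) (f : T -> R) (a : R) :
  continuous f -> closed [set x | f x = a].
Proof.
move=> cf; have := @preimage_closed T R f [set y | y = a].
by apply; [move=> x _; apply: cf | exact: closed_eq].
Qed.

Lemma sq_le_sum (I : finType) (f : I -> R) k : f k ^+ 2 <= \sum_l f l ^+ 2.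
Proof.
rewrite (bigD1 k) //= lerDl; apply: sumr_ge0 => l _; exact: sqr_ge0.
Qed.

Lemma quad0 (c d : R) : (forall t, 0 <= 2 * t * c + t ^+ 2 * d) -> c = 0.
Proof.
move=> H.
pose e := (`|d| + 1)^-1.
have e0 : 0 < e by rewrite invr_gt0; have := normr_ge0 d; lra.
have ed : e * `|d| < 1.
  rewrite /e mulrC -(@ltr_pM2r _ (`|d| + 1)); last by have := normr_ge0 d; lra.
  rewrite mul1r -mulrA mulVf ?mulr1; first lra.
  by have := normr_ge0 d; lra.
have := H (- c * e).
have h1 : d <= `|d| := ler_norm d.
have h2 : 0 <= c ^+ 2 * e ^+ 2 by rewrite -exprMn sqr_ge0.
have h3 : (- c * e) ^+ 2 * d <= c ^+ 2 * e ^+ 2 * `|d|.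
  by rewrite exprMn sqrrN ler_wpM2l.
have h4 : c ^+ 2 * e ^+ 2 * `|d| <= c ^+ 2 * e.
  have : e * `|d| * e <= 1 * e by rewrite ler_wpM2r //; [lra | lra].
  have : 0 <= c ^+ 2 := sqr_ge0 c.
  nra.
move=> h5.
have : c ^+ 2 * e <= 0 by nra.
rewrite pmulr_lle0 // => hc.
by apply/eqP; rewrite -sqrf_eq0 eq_le hc sqr_ge0.
Qed.

End S8.
Section Spec.
Variables (R : realType) (p r : nat) (A : 'M[R]_(p, r)) (c : 'I_p -> R).

Definition sA j (f : 'I_r -> R) := \sum_k A j k * f k.
Definition Qf (f : 'I_r -> R) := \sum_j c j * sA j f ^+ 2.
Definition Nf (f : 'I_r -> R) := \sum_k f k ^+ 2.
Definition Mf (f : 'I_r -> R) k := \sum_j c j * A j k * sA j f.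
Definition Bl (f g : 'I_r -> R) := \sum_j c j * sA j f * sA j g.

Lemma sA_lin j f h t : sA j (fun k => f k + t * h k) = sA j f + t * sA j h.
Proof.
rewrite /sA mulr_sumr -big_split; apply: eq_bigr => k _ /=; ring.
Qed.
Lemma sA_scale j f a : sA j (fun k => a * f k) = a * sA j f.
Proof. rewrite /sA mulr_sumr; apply: eq_bigr => k _ /=; ring. Qed.

Lemma Qf_lin f h t : Qf (fun k => f k + t * h k) = Qf f + 2 * t * Bl f h + t ^+ 2 * Qf h.
Proof.
rewrite /Qf /Bl !mulr_sumr -!big_split; apply: eq_bigr => j _ /=.
rewrite sA_lin; ring.
Qed.
Lemma Nf_lin f h t : Nf (fun k => f k + t * h k) =
  Nf f + 2 * t * (\sum_k f k * h k) + t ^+ 2 * Nf h.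
Proof.
rewrite /Nf !mulr_sumr -!big_split; apply: eq_bigr => j _ /=; ring.
Qed.
Lemma Qf_scale f a : Qf (fun k => a * f k) = a ^+ 2 * Qf f.
Proof. rewrite /Qf mulr_sumr; apply: eq_bigr => j _; rewrite sA_scale; ring. Qed.
Lemma Nf_scale f a : Nf (fun k => a * f k) = a ^+ 2 * Nf f.
Proof. rewrite /Nf mulr_sumr; apply: eq_bigr => j _; ring. Qed.
Lemma Nf_ge0 f : 0 <= Nf f.
Proof. by apply: sumr_ge0 => k _; rewrite sqr_ge0. Qed.
Lemma Qf_ge0 f : (forall j, 0 <= c j) -> 0 <= Qf f.
Proof. by move=> c0; apply: sumr_ge0 => j _; rewrite mulr_ge0 ?sqr_ge0. Qed.
Lemma Bl_Mf f g : Bl f g = \sum_k g k * Mf f k.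
Proof.
rewrite /Bl /Mf /sA.
under eq_bigr do rewrite mulr_sumr.
rewrite exchange_big /=; apply: eq_bigr => k _.
rewrite mulr_sumr; apply: eq_bigr => j _; ring.
Qed.
Lemma Nf_eq0 f : Nf f = 0 -> forall k, f k = 0.
Proof.
move=> /psumr_eq0P H k; apply/eqP; rewrite -sqrf_eq0; apply/eqP; apply: H => //.
by move=> l _; rewrite sqr_ge0.
Qed.

Lemma spectral (s : R) (r0 : (0 < r)%N) :
  (forall j, 0 <= c j) ->
  (forall f, Nf f = 1 -> s <= Num.sqrt (Nf (Mf f))) ->
  forall f, s * Nf f <= Qf f.
Proof.
move=> c0 hs.
pose k0 := Ordinal r0.
pose F (x : 'rV[R]_r) := - Qf (fun k => x 0 k).
pose S := [set x : 'rV[R]_r | Nf (fun k => x 0 k) = 1].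
have cN : continuous (fun x : 'rV[R]_r => Nf (fun k => x 0 k)).
  rewrite /Nf; apply: cont_sum => k; apply: cont_X; exact: cont_coord.
have cF : continuous F.
  rewrite /F /Qf /sA; apply: cont_N; apply: cont_sum => j.
  apply: cont_M; first exact: cont_c.
  apply: cont_X; apply: cont_sum => k; apply: cont_M; [exact: cont_c | exact: cont_coord].
have cS : closed S by apply: closed_eqv.
have bS : forall x, S x -> forall k, `|x 0 k| <= 1.
  move=> x Sx k; have := @sq_le_sum R _ (fun k => x 0 k) k.
  rewrite -/(Nf _) Sx -real_normK ?num_real // => h.
  have := normr_ge0 (x 0 k); nra.
have S1 : S (\row_k (k == k0)%:R).
  rewrite /S /= /Nf (bigD1 k0) //= big1 ?mxE ?eqxx ?addr0 ?expr1n //.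
  by move=> k /negPf hk; rewrite mxE hk expr0n.
have [x0 [Sx0 Hx0]] := @rV_max R r F S 1 _ ler01 cF cS bS S1.
pose g k := x0 0 k.
have Ng : Nf g = 1 by [].
have gmin x : S x -> Qf g <= Qf (fun k => x 0 k).
  by move=> /Hx0; rewrite /F lerN2.
set m := Qf g.
have m0 : 0 <= m by apply: Qf_ge0.
have mN f : m * Nf f <= Qf f.
  have [N0|Np] := eqVneq (Nf f) 0.
    by rewrite N0 mulr0; apply: Qf_ge0.
  have Np' : 0 < Nf f by rewrite lt_neqAle eq_sym Np Nf_ge0.
  pose a := (Num.sqrt (Nf f))^-1.
  have a2 : a ^+ 2 * Nf f = 1.
    by rewrite /a exprVn sqr_sqrtr ?Nf_ge0 // mulVf.
  have := gmin (\row_k (a * f k)).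
  rewrite /S /= (_ : (fun k => (\row_k0 (a * f k0)) 0 k) = (fun k => a * f k)); last first.
    by apply/funext => k; rewrite mxE.
  rewrite Nf_scale Qf_scale a2 => /(_ erefl) h.
  have := ler_wpM2r (Nf_ge0 f) h.
  by rewrite mulrAC a2 mul1r.
have Bl_eq w : Bl g w = m * \sum_k g k * w k.
  apply/eqP; rewrite -subr_eq0; apply/eqP.
  apply: (@quad0 _ _ (Qf w - m * Nf w)) => t.
  have := mN (fun k => g k + t * w k).
  rewrite Qf_lin Nf_lin Ng -/m => h.
  have : 0 <= Qf w - m * Nf w by rewrite subr_ge0.
  nra.
pose w k := Mf g k - m * g k.
have w0 : forall k, w k = 0.
  apply: Nf_eq0.
  have := Bl_eq w; rewrite Bl_Mf /Nf.
  have -> : \sum_k w k ^+ 2 = \sum_k w k * Mf g k - m * \sum_k g k * w k.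
    rewrite mulr_sumr -sumrB; apply: eq_bigr => k _; rewrite /w; ring.
  by move=> ->; rewrite subrr.
have NM : Nf (Mf g) = m ^+ 2.
  rewrite /Nf (eq_bigr (fun k => m ^+ 2 * g k ^+ 2)).
    by rewrite -mulr_sumr -/(Nf g) Ng mulr1.
  move=> k _; have := w0 k; rewrite /w => /eqP; rewrite subr_eq0 => /eqP ->; ring.
have sm : s <= m by have := hs g Ng; rewrite NM sqrtr_sqr ger0_norm.
move=> f; apply: le_trans (mN f); apply: ler_wpM2r => //; exact: Nf_ge0.
Qed.

End Spec.
Section Bridge.
Variables (R : realType) (n p r : nat).

Lemma dotvE (x y : 'cV[R]_r) : dotv x y = \sum_k x k 0 * y k 0.
Proof. by rewrite /dotv !mxE; apply: eq_bigr => k _; rewrite mxE. Qed.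
Lemma acolE (A : 'M[R]_(p, r)) j k : acol A j k 0 = A j k.
Proof. by rewrite /acol !mxE. Qed.
Lemma thcolE (Th : 'M[R]_(n, r)) i k : thcol Th i k 0 = Th i k.
Proof. by rewrite /thcol !mxE. Qed.
Lemma fnorm_col (u : 'cV[R]_r) : fnorm u = Num.sqrt (\sum_k u k 0 ^+ 2).
Proof. by rewrite /fnorm; congr Num.sqrt; apply: eq_bigr => k _; rewrite big_ord1. Qed.
Lemma fnorm_row (w : 'rV[R]_r) : fnorm w = Num.sqrt (\sum_k w 0 k ^+ 2).
Proof. by rewrite /fnorm big_ord1. Qed.

Lemma sing_val_le (M : 'M[R]_r) (u : 'cV[R]_r) :
  fnorm u = 1 -> sing_val r M <= fnorm (M *m u).
Proof.
move=> u1; rewrite /sing_val; apply: ge_sup.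
  exists (inf [set fnorm (M *m u) | u in
              [set u : 'cV[R]_r | (u^T <= 1%:M)%MS /\ fnorm u = 1]]).
  by exists 1%:M => //=; rewrite mxrank1.
move=> y [V /= rV <-].
apply: ge_inf.
  exists 0 => z [v _ <-]; rewrite /fnorm; exact: sqrtr_ge0.
exists u => //; split => //; apply: submx_full; by rewrite /row_full rV.
Qed.

Lemma I1_mul (b2 : R -> R) (Om : 'M[bool]_(n, p)) (Th : 'M[R]_(n, r)) (As A : 'M[R]_(p, r)) (i : 'I_n) (u : 'cV[R]_r) k :
  (I1 b2 Om Th As A i *m u) k 0 =
  @Mf R p r A (fun j => omr R Om i j * b2 (Mstar Th As i j)) (fun l => u l 0) k.
Proof.
rewrite /I1 /Mf mulmx_suml summxE; apply: eq_bigr => j _.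
have E : (acol A j *m ((acol A j)^T *m u)) k 0 = A j k * \sum_l A j l * u l 0.
  rewrite mxE big_ord1 acolE mxE; congr (_ * _); apply: eq_bigr => l _.
  by rewrite !mxE.
rewrite -scalemxAl mxE -mulmxA E /sA; ring.
Qed.

End Bridge.
Section S15.
Variable R : realType.

Lemma der_term (b b1 : R -> R) (wj yj a d : R) :
  (forall x : R, is_derive x 1 b (b1 x)) ->
  is_derive (0:R) 1 (fun t => wj * (yj * (a + t * d) - b (a + t * d)))
    (wj * (yj * d - b1 a * d)).
Proof.
move=> Hb.
have Hy : forall x : R, is_derive x 1 (fun x => yj * x) ((fun _ => yj) x).
  move=> x.
  have -> : (fun x => yj * x) = yj \*: (@id R) by apply/funext.
  have H := @is_deriveZ R R R id yj x 1 1 (is_derive_id x 1).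
  by rewrite /= /GRing.scale /= mulr1 in H.
have H1 := @is_derive_affine R (fun x => yj * x) (fun _ => yj) a d Hy.
have H2 := @is_derive_affine R b b1 a d Hb.
have H3 := is_deriveB H1 H2.
have H4 := is_deriveZ wj H3.
have -> : (fun t => wj * (yj * (a + t * d) - b (a + t * d))) =
   wj \*: ((fun t => yj * (a + t * d)) - (fun t => b (a + t * d))).
  by apply/funext.
exact: H4.
Qed.

Lemma abs_le_sum (I : finType) (f : I -> R) k : `|f k| <= \sum_l `|f l|.
Proof.
rewrite (bigD1 k) //= lerDl; apply: sumr_ge0 => l _; exact: normr_ge0.
Qed.

End S15.

Section Main.
Variables (R : realType) (n p r : nat) (phi : R) (b b1 b2 b3 : R -> R)
  (Y : 'M[R]_(n, p)) (Om : 'M[bool]_(n, p)) (Th : 'M[R]_(n, r))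
  (As A : 'M[R]_(p, r)) (i : 'I_n) (C1 C2 xi : R).
Hypothesis Hb1 : forall x : R, is_derive x 1 b (b1 x).
Hypothesis Hb2 : forall x : R, is_derive x 1 b1 (b2 x).
Hypothesis Hb3 : forall x : R, is_derive x 1 b2 (b3 x).
Hypothesis cb3 : continuous b3.
Hypothesis b2pos : forall x : R, 0 < b2 x.
Hypothesis HTh : norm2inf Th <= C1.
Hypothesis HAs : norm2inf As <= C2.
Hypothesis HA : norm2inf A <= C2.
Hypothesis xi0 : 0 < xi.

Local Notation w j := (omr R Om i j).
Local Notation mm j := (Mstar Th As i j).
Local Notation cc := (fun j => omr R Om i j * b2 (Mstar Th As i j)).
Local Notation th := (fun k => Th i k).
Local Notation sAA := (@sA R p r A).
Local Notation NN := (@Nf R r).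
Definition ee j := \sum_k (A j k - As j k) * Th i k.
Definition alpha := C2 * (C1 + xi).
Definition KK := kappa3 b3 alpha.

Lemma w_ge0 j : 0 <= w j.
Proof. by rewrite /omr ler0n. Qed.
Lemma cc_ge0 j : 0 <= cc j.
Proof. by rewrite mulr_ge0 ?w_ge0 // ltW. Qed.

Lemma norm2inf_ge0 m c (M : 'M[R]_(m, c)) : 0 <= norm2inf M.
Proof. exact: bigmax_ge_id. Qed.
Lemma row_le m c (M : 'M[R]_(m, c)) j : fnorm (row j M) <= norm2inf M.
Proof. exact: le_bigmax. Qed.

Lemma C1_ge0 : 0 <= C1. Proof. exact: le_trans (@norm2inf_ge0 _ _ Th) HTh. Qed.
Lemma C2_ge0 : 0 <= C2. Proof. exact: le_trans (@norm2inf_ge0 _ _ A) HA. Qed.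
Lemma alpha_ge0 : 0 <= alpha.
Proof. by rewrite /alpha mulr_ge0 ?C2_ge0 // addr_ge0 ?C1_ge0 // ltW. Qed.

Lemma CS_abs (I : finType) (x y : I -> R) :
  `|\sum_k x k * y k| <= Num.sqrt (\sum_k x k ^+ 2) * Num.sqrt (\sum_k y k ^+ 2).
Proof.
rewrite -sqrtrM; last by apply: sumr_ge0 => k _; rewrite sqr_ge0.
rewrite -sqrtr_sqr ler_sqrt; first exact: CS.
by rewrite mulr_ge0 //; apply: sumr_ge0 => k _; rewrite sqr_ge0.
Qed.

Lemma sA_bound j f : `|sAA j f| <= C2 * Num.sqrt (NN f).
Proof.
apply: le_trans (@CS_abs _ (fun k => A j k) f) _; apply: ler_wpM2r; first exact: sqrtr_ge0.
apply: (le_trans _ (le_trans (@row_le _ _ A j) HA)); rewrite fnorm_row.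
by rewrite le_eqVlt; apply/orP; left; apply/eqP; congr Num.sqrt; apply: eq_bigr => k _; rewrite mxE.
Qed.

Lemma Nth : Num.sqrt (NN th) <= C1.
Proof.
apply: (le_trans _ (le_trans (@row_le _ _ Th i) HTh)); rewrite fnorm_row.
by rewrite le_eqVlt; apply/orP; left; apply/eqP; congr Num.sqrt; apply: eq_bigr => k _; rewrite mxE.
Qed.

Lemma mm_bound j : `|mm j| <= C2 * C1.
Proof.
have -> : mm j = \sum_k As j k * Th i k.
  by rewrite !mxE; apply: eq_bigr => k _; rewrite mxE mulrC.
apply: le_trans (@CS_abs _ (fun k => As j k) th) _; apply: ler_pM.
- exact: sqrtr_ge0.
- exact: sqrtr_ge0.
- apply: (le_trans _ (le_trans (@row_le _ _ As j) HAs)); rewrite fnorm_row.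
  by rewrite le_eqVlt; apply/orP; left; apply/eqP; congr Num.sqrt; apply: eq_bigr => k _; rewrite mxE.
- exact: Nth.
Qed.

Lemma sA_th j : sAA j th = mm j + ee j.
Proof.
rewrite /sA /ee !mxE -big_split /=; apply: eq_bigr => k _; rewrite mxE; ring.
Qed.

Lemma K_bound t : `|t| <= alpha -> `|b3 t| <= KK.
Proof.
move=> ht; rewrite /KK /kappa3.
have cn : continuous (fun x => `|b3 x|).
  by apply: cont_o => //; exact: norm_continuous.
have [c _ Hc] := @EVT_max R (fun x => `|b3 x|) (- alpha) alpha
   (ltac:(have := alpha_ge0; lra)) (continuous_subspaceT cn).
apply: sup_upper_bound; last by exists t.
split; first by exists `|b3 t|, t.
exists `|b3 c| => y [x hx <-]; apply: Hc.
by move: hx; rewrite /= in_itv /= -ler_norml.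
Qed.

Lemma K_ge0 : 0 <= KK.
Proof.
have h : `|(0:R)| <= alpha by rewrite normr0 alpha_ge0.
exact: le_trans (normr_ge0 (b3 0)) (@K_bound 0 h).
Qed.

Lemma col_sA (f : 'I_r -> R) j : dotv (acol A j) (\col_k f k) = sAA j f.
Proof. by rewrite dotvE /sA; apply: eq_bigr => k _; rewrite !mxE. Qed.
Lemma col_ee j : dotv (acol A j - acol As j) (thcol Th i) = ee j.
Proof. by rewrite dotvE /ee; apply: eq_bigr => k _; rewrite !mxE. Qed.
Lemma col_fn (f : 'I_r -> R) : fnorm (\col_k f k) = Num.sqrt (NN f).
Proof. by rewrite fnorm_col /Nf; congr Num.sqrt; apply: eq_bigr => k _; rewrite mxE. Qed.

Lemma unit_sA (u : 'cV[R]_r) j : fnorm u = 1 ->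
  `|dotv (acol A j) u| <= C2.
Proof.
move=> u1.
have := sA_bound j (fun k => u k 0).
have -> : sAA j (fun k => u k 0) = dotv (acol A j) u.
  by rewrite dotvE /sA; apply: eq_bigr => k _; rewrite acolE.
by rewrite /Nf -fnorm_col u1 mulr1.
Qed.

Lemma beta_bound f : NN f = 1 ->
  \sum_j w j * ee j ^+ 2 * `|sAA j f| <= beta1 Om Th As A i.
Proof.
move=> N1; rewrite /beta1; apply: sup_upper_bound; last first.
  exists (\col_k f k); first by rewrite /= col_fn N1 sqrtr1.
  by apply: eq_bigr => j _; rewrite col_sA col_ee.
split.
  by eexists; exists (\col_k f k) => //; rewrite /= col_fn N1 sqrtr1.
exists (\sum_j w j * ee j ^+ 2 * C2) => y [u /= u1 <-].
apply: ler_sum => j _; rewrite col_ee.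
by apply: ler_wpM2l; [rewrite mulr_ge0 ?w_ge0 ?sqr_ge0 | exact: unit_sA].
Qed.

Lemma gamma_bound f : NN f = 1 ->
  \sum_j w j * `|sAA j f| ^+ 3 <= gamma1 Om A i.
Proof.
move=> N1; rewrite /gamma1; apply: sup_upper_bound; last first.
  exists (\col_k f k); first by rewrite /= col_fn N1 sqrtr1.
  by apply: eq_bigr => j _; rewrite col_sA.
split.
  by eexists; exists (\col_k f k) => //; rewrite /= col_fn N1 sqrtr1.
exists (\sum_j w j * C2 ^+ 3) => y [u /= u1 <-].
apply: ler_sum => j _.
apply: ler_wpM2l; first exact: w_ge0.
by apply: lerXn2r; rewrite ?nnegrE ?normr_ge0 ?C2_ge0 // unit_sA.
Qed.
Lemma sA_add j f h : sAA j (fun k => f k + h k) = sAA j f + sAA j h.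
Proof. by rewrite /sA -big_split; apply: eq_bigr => k _ /=; ring. Qed.

Lemma T1_eq f : \sum_j w j * (Y i j - b1 (mm j)) * sAA j f =
  \sum_k ZOA b1 Y Om Th As A i 0 k * f k.
Proof.
have E k : ZOA b1 Y Om Th As A i 0 k = \sum_j w j * (Y i j - b1 (mm j)) * A j k.
  rewrite /ZOA mul_mx_diag mxE; apply: eq_bigr => j _; rewrite !mxE; ring.
under [RHS]eq_bigr do rewrite E mulr_suml.
rewrite exchange_big /=; apply: eq_bigr => j _.
rewrite /sA mulr_sumr; apply: eq_bigr => k _; ring.
Qed.

Lemma T2_eq f : \sum_j cc j * ee j * sAA j f =
  \sum_k B1 b2 Om Th As A i k 0 * f k.
Proof.
have E k : B1 b2 Om Th As A i k 0 = \sum_j cc j * ee j * A j k.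
  rewrite /B1 summxE; apply: eq_bigr => j _; rewrite mxE acolE col_ee //.
under [RHS]eq_bigr do rewrite E mulr_suml.
rewrite exchange_big /=; apply: eq_bigr => j _.
rewrite /sA mulr_sumr; apply: eq_bigr => k _; ring.
Qed.

Lemma spec_inst f :
  sing_val r (I1 b2 Om Th As A i) * NN f <= @Qf R p r A cc f.
Proof.
case: (posnP r) => [r0|rpos].
  have N0 : NN f = 0.
    by rewrite /Nf big1 // => k _; case: k => k hk; exfalso; rewrite r0 in hk.
  have Q0 : @Qf R p r A cc f = 0.
    rewrite /Qf big1 // => j _; rewrite /sA big1 ?expr0n ?mulr0 // => k _.
    by case: k => k hk; exfalso; rewrite r0 in hk.
  by rewrite N0 Q0 mulr0.
apply: spectral => //; first exact: cc_ge0.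
move=> g N1.
have := @sing_val_le R r (I1 b2 Om Th As A i) (\col_k g k).
rewrite col_fn N1 sqrtr1 => /(_ erefl); rewrite fnorm_col.
rewrite /Nf; congr (_ <= Num.sqrt _); apply: eq_bigr => k _.
rewrite I1_mul; congr (_ ^+ 2); congr (Mf _ _ _ _).
by apply/funext => l; rewrite mxE.
Qed.
Lemma boundary f :
  let sr := sing_val r (I1 b2 Om Th As A i) in
  0 < sr ->
  2 * sr^-1 * (fnorm (ZOA b1 Y Om Th As A i) + fnorm (B1 b2 Om Th As A i)
               + beta1 Om Th As A i * KK) <= xi ->
  (2 * gamma1 Om A i * KK = 0 \/ xi <= sr / (2 * gamma1 Om A i * KK)) ->
  NN f = xi ^+ 2 ->
  \sum_j w j * (Y i j - b1 (sAA j (fun k => th k + f k))) * sAA j f <= 0.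
Proof.
move=> sr sr0 hZ hG Nf2.
set ZZ := fnorm (ZOA b1 Y Om Th As A i).
set BB := fnorm (B1 b2 Om Th As A i).
set bet := beta1 Om Th As A i.
set gam := gamma1 Om A i.
have sqN : Num.sqrt (NN f) = xi by rewrite Nf2 sqrtr_sqr ger0_norm // ltW.
pose s j := sAA j f.
pose x j := sAA j (fun k => th k + f k).
have xE j : x j = mm j + ee j + s j by rewrite /x sA_add sA_th.
pose Rm j := b1 (x j) - b1 (mm j) - b2 (mm j) * (x j - mm j).
have hal : C2 * C1 <= alpha.
  by rewrite /alpha ler_wpM2l ?C2_ge0 // lerDl ltW.
have hRm j : `|Rm j| <= KK / 2 * (ee j + s j) ^+ 2.
  have -> : ee j + s j = x j - mm j by rewrite xE; ring.
  apply: (@taylor R b1 b2 b3 KK alpha Hb2 Hb3 K_bound).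
    rewrite /x sA_add; apply: le_trans (ler_normD _ _) _.
    have h1 := sA_bound j th; have h2 := sA_bound j f.
    rewrite sqN in h2.
    have h3 : C2 * Num.sqrt (NN th) <= C2 * C1 by rewrite ler_wpM2l ?C2_ge0 ?Nth.
    rewrite /alpha mulrDr; lra.
  exact: le_trans (mm_bound j) hal.
have decomp : \sum_j w j * (Y i j - b1 (x j)) * s j =
   \sum_j w j * (Y i j - b1 (mm j)) * s j - \sum_j cc j * ee j * s j
   - \sum_j cc j * s j ^+ 2 - \sum_j w j * Rm j * s j.
  rewrite -!sumrB; apply: eq_bigr => j _.
  have -> : b1 (x j) = b1 (mm j) + b2 (mm j) * (ee j + s j) + Rm j.
    by rewrite /Rm xE; ring.
  ring.
rewrite -/x -/s decomp.
have T1 : \sum_j w j * (Y i j - b1 (mm j)) * s j <= ZZ * xi.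
  rewrite T1_eq; have := @CS_abs _ (fun k => ZOA b1 Y Om Th As A i 0 k) f.
  rewrite -fnorm_row -/ZZ -/(NN f) sqN => h.
  exact: le_trans (ler_norm _) h.
have T2 : - (BB * xi) <= \sum_j cc j * ee j * s j.
  rewrite T2_eq; have := @CS_abs _ (fun k => B1 b2 Om Th As A i k 0) f.
  rewrite -fnorm_col -/BB -/(NN f) sqN => h.
  by move: h; rewrite ler_norml => /andP[h1 h2]; lra.
have T3 : sr * xi ^+ 2 <= \sum_j cc j * s j ^+ 2.
  by rewrite -Nf2; exact: spec_inst.
pose u k := xi^-1 * f k.
have Nu : NN u = 1 by rewrite /u Nf_scale Nf2 exprVn mulVf // expf_neq0 // gt_eqF.
have su j : s j = xi * sAA j u.
  by rewrite /u sA_scale mulrA mulfV ?mul1r // gt_eqF.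
have T4 : `|\sum_j w j * Rm j * s j| <= KK * (xi * bet + xi ^+ 3 * gam).
  apply: le_trans (ler_norm_sum _ _ _) _.
  apply: (@le_trans _ _ (\sum_j w j * (KK * (ee j ^+ 2 * `|s j| + `|s j| ^+ 3)))).
    apply: ler_sum => j _; rewrite normrM normrM (ger0_norm (w_ge0 j)).
    rewrite -mulrA ler_wpM2l ?w_ge0 //.
    apply: (@le_trans _ _ (KK / 2 * (ee j + s j) ^+ 2 * `|s j|)).
      by apply: ler_wpM2r => //; exact: hRm.
    have hK := K_ge0.
    have hs := normr_ge0 (s j).
    have e1 : (ee j + s j) ^+ 2 <= 2 * (ee j ^+ 2 + s j ^+ 2).
      have := sqr_ge0 (ee j - s j); lra.
    have e2 : s j ^+ 2 = `|s j| ^+ 2 by rewrite real_normK ?num_real.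
    have e3 : KK / 2 * (ee j + s j) ^+ 2 <= KK * (ee j ^+ 2 + s j ^+ 2).
      have -> : KK * (ee j ^+ 2 + s j ^+ 2) = KK / 2 * (2 * (ee j ^+ 2 + s j ^+ 2)) by field.
      by rewrite ler_wpM2l // divr_ge0.
    have := ler_wpM2r hs e3; rewrite e2 => h.
    apply: le_trans h _; rewrite le_eqVlt; apply/orP; left; apply/eqP; ring.
  have E1 : \sum_j w j * (ee j ^+ 2 * `|s j|) = xi * \sum_j w j * ee j ^+ 2 * `|sAA j u|.
    rewrite mulr_sumr; apply: eq_bigr => j _; rewrite su normrM (gtr0_norm xi0); ring.
  have E2 : \sum_j w j * `|s j| ^+ 3 = xi ^+ 3 * \sum_j w j * `|sAA j u| ^+ 3.
    rewrite mulr_sumr; apply: eq_bigr => j _; rewrite su normrM (gtr0_norm xi0); ring.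
  have -> : \sum_j w j * (KK * (ee j ^+ 2 * `|s j| + `|s j| ^+ 3)) =
     KK * (\sum_j w j * (ee j ^+ 2 * `|s j|) + \sum_j w j * `|s j| ^+ 3).
    rewrite -big_split mulr_sumr; apply: eq_bigr => j _ /=; ring.
  rewrite E1 E2; apply: ler_wpM2l; first exact: K_ge0.
  apply: lerD; apply: ler_wpM2l.
  - exact: ltW.
  - exact: beta_bound.
  - by rewrite exprn_ge0 // ltW.
  - exact: gamma_bound.
have hZ' : ZZ + BB + bet * KK <= sr * xi / 2.
  have e : ZZ + BB + bet * KK = (2 * sr^-1 * (ZZ + BB + bet * KK)) * (sr / 2).
    by field; rewrite gt_eqF.
  rewrite [leLHS]e.
  have h : 2 * sr^-1 * (ZZ + BB + bet * KK) * (sr / 2) <= xi * (sr / 2).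
    by rewrite ler_wpM2r // divr_ge0 // ltW.
  by apply: le_trans h _; rewrite le_eqVlt; apply/orP; left; apply/eqP; ring.
have hG' : gam * KK * xi ^+ 3 <= sr * xi ^+ 2 / 2.
  case: hG => [h0|hle].
    have -> : gam * KK = 0.
      by move: h0; rewrite -mulrA => /eqP; rewrite mulf_eq0 pnatr_eq0 /= => /eqP.
    by rewrite mul0r divr_ge0 // mulr_ge0 ?ltW // exprn_gt0.
  have [gK|gK] := leP (gam * KK) 0.
    apply: (@le_trans _ _ (0)).
      by rewrite pmulr_lle0 // exprn_gt0.
    by rewrite divr_ge0 // mulr_ge0 ?ltW // exprn_gt0.
  have : xi * (2 * gam * KK) <= sr.
    have P0 : 0 < 2 * gam * KK by rewrite -mulrA mulr_gt0.
    by move: hle; rewrite ler_pdivlMr.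
  move=> h.
  have xi2 : 0 < xi ^+ 2 by rewrite exprn_gt0.
  have := ler_wpM2r (ltW xi2) h.
  move=> h2; nra.
have hx : xi * (ZZ + BB + bet * KK) <= xi * (sr * xi / 2).
  by rewrite ler_wpM2l // ltW.
have := ler_norm (- \sum_j w j * Rm j * s j); rewrite normrN => h4.
have xi3 : xi ^+ 3 = xi * xi ^+ 2 by rewrite exprS.
have xi2 : xi ^+ 2 = xi * xi by rewrite expr2.
rewrite xi3 xi2 in T4 hG' T3.
lra.
Qed.
Lemma existence :
  let sr := sing_val r (I1 b2 Om Th As A i) in
  0 < sr ->
  2 * sr^-1 * (fnorm (ZOA b1 Y Om Th As A i) + fnorm (B1 b2 Om Th As A i)
               + beta1 Om Th As A i * KK) <= xi ->
  (2 * gamma1 Om A i * KK = 0 \/ xi <= sr / (2 * gamma1 Om A i * KK)) ->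
  exists tht : 'cV[R]_r,
    fnorm (tht - thcol Th i) <= xi /\ S1 phi b1 Y Om i tht A = 0.
Proof.
move=> sr sr0 hZ hG.
pose Lf (f : 'I_r -> R) := \sum_j w j * (Y i j * sAA j f - b (sAA j f)).
pose F (x : 'rV[R]_r) := Lf (fun k => x 0 k).
pose Kb := [set x : 'rV[R]_r | NN (fun k => x 0 k - th k) <= xi ^+ 2].
have cb : continuous b := @cont_of_der R b b1 Hb1.
have cS j : continuous (fun x : 'rV[R]_r => sAA j (fun k => x 0 k)).
  rewrite /sA; apply: cont_sum => k; apply: cont_M; [exact: cont_c | exact: cont_coord].
have cF : continuous F.
  rewrite /F /Lf; apply: cont_sum => j; apply: cont_M; first exact: cont_c.
  apply: cont_B; first by apply: cont_M; [exact: cont_c | exact: cS].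
  by apply: cont_o; [exact: cb | exact: cS].
have cK : closed Kb.
  apply: closed_lev; rewrite /Nf; apply: cont_sum => k; apply: cont_X.
  apply: cont_B; [exact: cont_coord | exact: cont_c].
pose B := \sum_l `|th l| + xi.
have B0 : 0 <= B.
  by rewrite addr_ge0 ?(ltW xi0) //; apply: sumr_ge0 => l _; exact: normr_ge0.
have hB : forall x, Kb x -> forall k, `|x 0 k| <= B.
  move=> x Kx k.
  have h1 := @sq_le_sum R _ (fun k => x 0 k - th k) k.
  have h2 : (x 0 k - th k) ^+ 2 <= xi ^+ 2 by apply: le_trans h1 Kx.
  have h3 : `|x 0 k - th k| <= xi.
    have : `|x 0 k - th k| ^+ 2 <= xi ^+ 2 by rewrite real_normK ?num_real.
    by rewrite ler_pXn2r // ?nnegrE ?normr_ge0 // ltW.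
  have h4 := @abs_le_sum R _ th k.
  have h5 : `|x 0 k| <= `|x 0 k - th k| + `|th k|.
    by have := ler_normD (x 0 k - th k) (th k); rewrite subrK.
  rewrite /B; lra.
have K1 : Kb (\row_k th k).
  rewrite /Kb /= /Nf big1 ?exprn_ge0 ?ltW // => k _; rewrite mxE subrr expr0n.
  by [].
have [x0 [Kx0 Hmax]] := @rV_max R r F Kb B _ B0 cF cK hB K1.
pose g k := x0 0 k.
pose G k := \sum_j w j * (Y i j - b1 (sAA j g)) * A j k.
have Gdot v : \sum_j w j * (Y i j - b1 (sAA j g)) * sAA j v = \sum_k G k * v k.
  rewrite /G; under [RHS]eq_bigr do rewrite mulr_suml.
  rewrite exchange_big /=; apply: eq_bigr => j _.
  rewrite /sA mulr_sumr; apply: eq_bigr => k _; ring.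
pose d0 k := g k - th k.
have Nd0 : NN d0 <= xi ^+ 2 by [].
have contra v : 0 < \sum_k G k * v k ->
    (0 < xi ^+ 2 - NN d0 \/ \sum_k d0 k * v k < 0) -> False.
  move=> dpos hD.
  pose h t := Lf (fun k => g k + t * v k).
  have hder : is_derive (0:R) 1 h (\sum_k G k * v k).
    rewrite -Gdot.
    have -> : h = \sum_(j < p) (fun t => w j * (Y i j * (sAA j g + t * sAA j v)
                                        - b (sAA j g + t * sAA j v))).
      apply/funext => t; rewrite fct_sumE /h /Lf; apply: eq_bigr => j _.
      by rewrite sA_lin.
    have H := @is_derive_sum R R R p (fun j => (fun t => w j * (Y i j * (sAA j g + t * sAA j v)
                                        - b (sAA j g + t * sAA j v)))) 0 1
       (fun j => w j * (Y i j * sAA j v - b1 (sAA j g) * sAA j v))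
       (fun j => @der_term R b b1 _ _ _ _ Hb1).
    apply: (is_derive_eq H).
    by apply: eq_bigr => j _; ring.
  have [e1 e10 He1] := @deriv_pos R h _ hder dpos.
  have [e2 e20 He2] := @small_t R (\sum_k d0 k * v k) (NN v) (xi ^+ 2 - NN d0)
     (@Nf_ge0 R r v) (ltac:(rewrite subr_ge0; exact: Nd0)) hD.
  pose t := Num.min e1 e2 / 2.
  have mpos : 0 < Num.min e1 e2 by rewrite lt_min e10 e20.
  have t0 : 0 < t by rewrite divr_gt0.
  have tm : t < Num.min e1 e2 by rewrite /t ltr_pdivrMr // ltr_pMr // ltr1n.
  have t1 : t < e1 by apply: lt_le_trans tm _; rewrite ge_min lexx.
  have t2 : t < e2 by apply: lt_le_trans tm _; rewrite ge_min lexx orbT.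
  have := He1 t; rewrite t0 t1 => /(_ erefl) hlt.
  have h0 : h 0 = F x0.
    rewrite /h /F; congr Lf; apply/funext => k; by rewrite mul0r addr0.
  have Kx : Kb (\row_k (g k + t * v k)).
    rewrite /Kb /=.
    have -> : (fun k => (\row_k0 (g k0 + t * v k0)) 0 k - th k) =
        (fun k => d0 k + t * v k).
      by apply/funext => k; rewrite mxE /d0; ring.
    rewrite Nf_lin.
    have := He2 t; rewrite t0 t2 => /(_ erefl); lra.
  have := Hmax _ Kx.
  have -> : F (\row_k (g k + t * v k)) = h t.
    by rewrite /F /h; congr Lf; apply/funext => k; rewrite mxE.
  rewrite -h0; lra.
have G0 : forall k, G k = 0.
  apply: Nf_eq0; apply/eqP; rewrite eq_le Nf_ge0 andbT leNgt; apply/negP => NGp.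
  have GG : \sum_k G k * G k = NN G by apply: eq_bigr => k _; rewrite expr2.
  have [Dp|D0] := ltP 0 (xi ^+ 2 - NN d0).
    by apply: (contra G); [rewrite GG | left].
  have Neq : NN d0 = xi ^+ 2 by apply/eqP; rewrite eq_le Nd0 /=; lra.
  have bd := boundary d0 sr0 hZ hG Neq.
  have e : (fun k => th k + d0 k) = g.
    by apply/funext => k; rewrite /d0; ring.
  rewrite e Gdot in bd.
  apply: (contra (fun k => G k - d0 k)).
    have -> : \sum_k G k * (G k - d0 k) = NN G - \sum_k G k * d0 k.
      by rewrite -GG -sumrB; apply: eq_bigr => k _; ring.
    lra.
  right.
  have -> : \sum_k d0 k * (G k - d0 k) = \sum_k G k * d0 k - NN d0.
    by rewrite /Nf -sumrB; apply: eq_bigr => k _; ring.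
  rewrite Neq; have : 0 < xi ^+ 2 by rewrite exprn_gt0.
  lra.
exists (\col_k g k); split.
  have -> : \col_k g k - thcol Th i = \col_k d0 k.
    by apply/matrixP => k l; rewrite (ord1 l) !mxE.
  rewrite col_fn; apply: (@le_trans _ _ (Num.sqrt (xi ^+ 2))).
    by rewrite ler_sqrt // exprn_ge0 // ltW.
  by rewrite sqrtr_sqr ger0_norm // ltW.
apply/matrixP => k l; rewrite (ord1 l) /S1 !mxE summxE.
rewrite (eq_bigr (fun j => w j * (Y i j - b1 (sAA j g)) * A j k)); last first.
  by move=> j _; rewrite mxE acolE col_sA.
by rewrite -/(G k) G0 mulr0.
Qed.

End Main.

Local Open Scope ring_scope.

Theorem mainTheorem9 (R : realType) (n p r : nat)
  (phi : R) (b b1 b2 b3 : R -> R)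
  (Y : 'M[R]_(n, p)) (Om : 'M[bool]_(n, p))
  (Th : 'M[R]_(n, r)) (As A : 'M[R]_(p, r)) (i : 'I_n) (C1 C2 : R) :
  0 < phi ->
  (* b is three times continuously differentiable, b1 = b', b2 = b'', b3 = b''' *)
  (forall x : R, is_derive x 1 b (b1 x)) ->
  (forall x : R, is_derive x 1 b1 (b2 x)) ->
  (forall x : R, is_derive x 1 b2 (b3 x)) ->
  continuous b3 ->
  (forall x : R, 0 < b2 x) ->
  norm2inf Th <= C1 ->
  norm2inf As <= C2 ->
  norm2inf A <= C2 ->
  0 < sing_val r (I1 b2 Om Th As A i) ->
  forall xi : R, 0 < xi ->
  let sr := sing_val r (I1 b2 Om Th As A i) in
  let k3 := kappa3 b3 (C2 * (C1 + xi)) in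
  2 * sr^-1 * (fnorm (ZOA b1 Y Om Th As A i) + fnorm (B1 b2 Om Th As A i)
               + beta1 Om Th As A i * k3) <= xi ->
  (2 * gamma1 Om A i * k3 = 0 \/ xi <= sr / (2 * gamma1 Om A i * k3)) ->
  exists tht : 'cV[R]_r,
    fnorm (tht - thcol Th i) <= xi /\ S1 phi b1 Y Om i tht A = 0.
Proof.
move=> phi0 Hb1 Hb2 Hb3 cb3 b2pos HTh HAs HA sr0 xi xi0 sr k3 hZ hG.
exact: (@existence R n p r phi b b1 b2 b3 Y Om Th As A i C1 C2 xi Hb1 Hb2 Hb3 cb3 b2pos HTh HAs HA xi0 sr0 hZ hG).
Qed.
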